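(* There are positive constants $c_1$ and $c_2$ such that the following holds. Let $n$ be even and let $N_n$ be the $n\times n$ random Bernoulli matrix. For any $L\ge n$, there is an $n\times n$ deterministic matrix $M$ such that $\|M\| = L$ and $$\mathbb{P}\Big(s_n(M+N_n)\le c_1\frac{n}{L}\Big)\ge c_2 n^{-1/2}.$$
   Context: The random Bernoulli matrix $N_n$ has independent entries, each taking the values $+1$ and $-1$ with probability $1/2$. $\|M\|$ denotes the operator norm (largest singular value) of $M$, and $s_n(X)$ denotes the smallest singular value of an $n\times n$ matrix $X$. *)

(* Defs.v *)
From HB Require Import structures.
From mathcomp Require Import all_boot all_order all_algebra.
From mathcomp Require Import classical_sets reals.
Set Implicit Arguments. Unset Strict Implicit. Unset Printing Implicit Defensive.
Import Order.TTheory GRing.Theory Num.Theory.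
Local Open Scope ring_scope.
Local Open Scope classical_set_scope.

Section Defs.
Variable R : realType.

Definition vnorm (n : nat) (x : 'cV[R]_n) : R := Num.sqrt (\sum_i (x i 0) ^+ 2).

Definition usphere (n : nat) : set 'cV[R]_n := [set x | vnorm x = 1].

Definition opnorm n (A : 'M[R]_n) : R :=
  sup [set vnorm (A *m x) | x in @usphere n].

Definition smin n (A : 'M[R]_n) : R :=
  inf [set vnorm (A *m x) | x in @usphere n].

Definition signmx n (B : 'M[bool]_n) : 'M[R]_n :=
  \matrix_(i, j) (if B i j then 1 else -1).

(* Probability, for the n x n Bernoulli matrix N_n (uniform on the 2^(n^2)
   sign matrices, i.e. independent fair +-1 entries), of the event E. *)
Definition bern_prob n (E : 'M[R]_n -> bool) : R :=
  #|[set B : 'M[bool]_n | E (signmx B)]|%:R / #|{: 'M[bool]_n}|%:R.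

End Defs.

(* Main.v *)
Require Import Defs.
From HB Require Import structures.
From mathcomp Require Import all_boot all_order all_algebra.
From mathcomp Require Import classical_sets reals.
From mathcomp Require Import ring lra.
Set Implicit Arguments. Unset Strict Implicit. Unset Printing Implicit Defensive.
Import Order.TTheory GRing.Theory Num.Theory.
Local Open Scope ring_scope.
Local Open Scope classical_set_scope.

Section Aux.
Variable R : realType.

Definition sgn (b : bool) : R := if b then 1 else -1.

Lemma sgnN b : sgn (~~ b) = - sgn b.
Proof. by case: b; rewrite /sgn ?opprK. Qed.

Definition flipmx n (i j : 'I_n) (B : 'M[bool]_n) : 'M[bool]_n :=
  \matrix_(k, l) (if (k == i) && (l == j) then ~~ B k l else B k l).

Lemma flipmxK n (i j : 'I_n) : involutive (flipmx i j).
Proof.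
move=> B; apply/matrixP => k l; rewrite !mxE.
by case: ((k == i) && (l == j)) => //=; rewrite negbK.
Qed.

Lemma flipmx_other n (i j : 'I_n) B k l : l != j -> flipmx i j B k l = B k l.
Proof. by move=> hl; rewrite mxE (negbTE hl) andbF. Qed.

Lemma flipmx_other' n (i j : 'I_n) B k l : k != i -> flipmx i j B k l = B k l.
Proof. by move=> hl; rewrite mxE (negbTE hl). Qed.

Lemma flip_sum n (i j : 'I_n) (g : 'M[bool]_n -> R) :
  (forall B, g (flipmx i j B) = g B) -> \sum_(B : 'M[bool]_n) sgn (B i j) * g B = 0.
Proof.
move=> hg.
have e : \sum_(B : 'M[bool]_n) sgn (B i j) * g B = - \sum_(B : 'M[bool]_n) sgn (B i j) * g B.
  rewrite [LHS](reindex_inj (inv_inj (@flipmxK n i j))) /= -sumrN.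
  apply: eq_bigr => B _; rewrite hg mxE !eqxx /= sgnN; ring.
move: e; set S := \sum_B _ => e; lra.
Qed.

Lemma vnorm_ge0 n (x : 'cV[R]_n) : 0 <= vnorm x.
Proof. exact: sqrtr_ge0. Qed.

Lemma vnormZ n (a : R) (x : 'cV[R]_n) : vnorm (a *: x) = `|a| * vnorm x.
Proof.
rewrite /vnorm -sqrtr_sqr -sqrtrM ?sqr_ge0 // mulr_sumr; congr Num.sqrt.
by apply: eq_bigr => i _; rewrite mxE exprMn.
Qed.

Lemma vnorm_le n m (x : 'cV[R]_n) (y : 'cV[R]_m) c : 0 <= c ->
  \sum_i (x i 0) ^+ 2 <= c ^+ 2 * \sum_i (y i 0) ^+ 2 -> vnorm x <= c * vnorm y.
Proof.
move=> c0 h; rewrite /vnorm -(ger0_norm c0) -sqrtr_sqr -sqrtrM ?sqr_ge0 //.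
by rewrite ler_sqrt // mulr_ge0 ?sqr_ge0 // sumr_ge0 // => i _; rewrite sqr_ge0.
Qed.

Lemma smin_le n (X : 'M[R]_n) (x : 'cV[R]_n) :
  1 <= \sum_i (x i 0) ^+ 2 -> smin X <= vnorm (X *m x).
Proof.
move=> h.
have v1 : 1 <= vnorm x by rewrite /vnorm -sqrtr1 ler_sqrt // (le_trans _ h).
have v0 : 0 < vnorm x by apply: lt_le_trans v1.
set u := (vnorm x)^-1 *: x.
have hu : usphere u.
  by rewrite /usphere /= vnormZ ger0_norm ?invr_ge0 ?ltW // mulVf // gt_eqF.
have lb : has_lbound [set vnorm (X *m x) | x in @usphere R n].
  by exists 0 => r [z _ <-]; exact: vnorm_ge0.
have H := ge_inf lb (ex_intro2 _ _ u hu erefl); rewrite /smin; apply: (le_trans H).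
rewrite -scalemxAr vnormZ ger0_norm; last by rewrite invr_ge0 ltW.
by apply: ler_piMl; [exact: vnorm_ge0 | rewrite invf_le1].
Qed.


Definition i1 {k} : 'I_k.+2 := lift ord0 ord0.

Definition Mdef {k} (L : R) : 'M[R]_k.+2 :=
  \matrix_(i, j) (if ((i < 2) && (j < 2))%N then L / 2 else if i == j then L else 0).

Lemma sum2 k (f : 'I_k.+2 -> R) :
  \sum_i f i = f ord0 + f i1 + \sum_(i < k) f (lift ord0 (lift ord0 i)).
Proof. by rewrite !big_ord_recl addrA. Qed.

Lemma liftlift_val k (j : 'I_k) : val (lift ord0 (lift ord0 j) : 'I_k.+2) = j.+2.
Proof. by []. Qed.

Lemma Mmul k L (x : 'cV[R]_k.+2) i :
  (Mdef L *m x) i 0 = if (i < 2)%N then L / 2 * (x ord0 0 + x i1 0) else L * x i 0.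
Proof.
rewrite mxE; case: ifP => hi.
  rewrite sum2 !mxE hi /= big1 ?addr0; first ring.
  move=> j _; rewrite mxE /= andbF.
  have -> : (i == lift ord0 (lift ord0 j)) = false.
    by apply/negbTE; rewrite -val_eqE liftlift_val; apply: contraTneq hi => ->.
  by rewrite mul0r.
rewrite (bigD1 i) //= mxE hi eqxx /= big1 ?addr0 // => j hj.
by rewrite mxE hi /= eq_sym (negbTE hj) mul0r.
Qed.


Lemma opnormM k (L : R) : 0 < L -> opnorm (Mdef L : 'M_k.+2) = L.
Proof.
move=> L0.
have ub : forall x : 'cV[R]_k.+2, usphere x -> vnorm (Mdef L *m x) <= L.
  move=> x hx; have hx' : vnorm x = 1 := hx.
  suff : vnorm (Mdef L *m x) <= L * vnorm x by rewrite hx' mulr1.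
  apply: vnorm_le; first exact: ltW.
  rewrite sum2 [in X in _ <= X]sum2 !Mmul /=.
  under eq_bigr do rewrite Mmul liftlift_val /=.
  have -> : \sum_(i < k) (L * x (lift ord0 (lift ord0 i)) 0) ^+ 2 =
            L ^+ 2 * \sum_(i < k) x (lift ord0 (lift ord0 i)) 0 ^+ 2.
    by rewrite mulr_sumr; apply: eq_bigr => i _; rewrite exprMn.
  set S := \sum_(i < k) _; set a := x ord0 0; set b := x i1 0.
  have : 0 <= L ^+ 2 * (a - b) ^+ 2 / 2 by apply: divr_ge0 => //; rewrite mulr_ge0 // sqr_ge0.
  move=> h; rewrite -subr_ge0; apply: le_trans h _; rewrite le_eqVlt; apply/orP; left.
  by apply/eqP; field.
set s : R := Num.sqrt (2^-1).
have s2 : s ^+ 2 = 2^-1 by rewrite sqr_sqrtr // invr_ge0.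
set u : 'cV[R]_k.+2 := \col_i (if (i < 2)%N then s else 0).
have hu : usphere u.
  rewrite /usphere /= /vnorm sum2 !mxE /= big1 ?addr0; last by move=> i _; rewrite mxE /= expr0n.
  by rewrite s2 (_ : 2^-1 + 2^-1 = 1 :> R) ?sqrtr1 //; field.
have Mu : Mdef L *m u = L *: u.
  apply/matrixP => i j; rewrite (ord1 j) Mmul !mxE /=; case: ifP => hi; rewrite ?hi //.
  by move: s2; clearbody s => _; field.
have mem : [set vnorm (Mdef L *m x) | x in @usphere R k.+2] L.
  by exists u => //; rewrite Mu vnormZ hu mulr1 gtr0_norm.
apply/le_anti/andP; split.
  by apply: ge_sup; [exists L | move=> y [x hx <-]; exact: ub].
by apply: ub_le_sup => //; exists L => y [x hx <-]; exact: ub.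
Qed.


Lemma addE m p (X Y : 'M[R]_(m, p)) i j : (X + Y) i j = X i j + Y i j.
Proof. by rewrite mxE. Qed.

Section Main.
Variable k : nat.
Local Notation n := k.+2.

Definition av (B : 'M[bool]_n) i j : R := sgn (B i j).
Definition dv B (i : 'I_n) : R := av B i ord0 - av B i i1.
Definition zv B (j : 'I_n) : R := if (j < 2)%N then 0 else dv B j.
Definition Qv B : R := \sum_i (\sum_j av B i j * zv B j) ^+ 2.
Definition G0 (B : 'M[bool]_n) : bool := (B ord0 ord0 == B ord0 i1) && (B i1 ord0 == B i1 i1).

Lemma lt2_cases (i : 'I_n) : (i < 2)%N -> i = ord0 \/ i = i1.
Proof.
move: i; case=> [[|[|m]]] hm //= _; [left|right]; exact: val_inj.
Qed.

Lemma key L B t : 0 < L -> G0 B -> 0 <= t -> Qv B <= t ^+ 2 * L ^+ 2 ->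
  smin (Mdef L + signmx R B) <= t.
Proof.
move=> L0 /andP[/eqP h0 /eqP h1] t0 hQ.
set e : 'cV[R]_n := \col_j (if val j == 0%N then 1 else if val j == 1%N then -1 else 0).
set y : 'cV[R]_n := \col_j (- zv B j / L).
have hd : forall i : 'I_n, (i < 2)%N -> dv B i = 0.
  move=> i /lt2_cases [->|->]; by rewrite /dv /av ?h0 ?h1 subrr.
have Hx : (Mdef L + signmx R B) *m (e + y) = signmx R B *m y.
  apply/matrixP => i j; rewrite (ord1 j) mulmxDl !mulmxDr !addE !Mmul.
  have Ae : (signmx R B *m e) i 0 = dv B i.
    rewrite mxE sum2 !mxE /= big1 ?addr0; first by rewrite /dv /av /sgn mulr1 mulrN1.
    by move=> m _; rewrite !mxE /= mulr0.
  rewrite Ae !mxE /= /zv /=.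
  case: ifP => hi.
    rewrite hd //; field; exact: lt0r_neq0.
  have -> : (nat_of_ord i == 0%N) = false by move: hi; case: (nat_of_ord i) => [|[|m]].
  have -> : (nat_of_ord i == 1%N) = false by move: hi; case: (nat_of_ord i) => [|[|m]].
  field; exact: lt0r_neq0.
have hx1 : 1 <= \sum_i ((e + y) i 0) ^+ 2.
  rewrite sum2 !mxE /= /zv /= oppr0 mul0r addr0 expr1n.
  rewrite -addrA lerDl addr_ge0 ?sqr_ge0 // sumr_ge0 // => i _; exact: sqr_ge0.
apply: le_trans (smin_le _ hx1) _.
rewrite Hx /vnorm -(ger0_norm t0) -sqrtr_sqr ler_sqrt ?sqr_ge0 //.
have -> : \sum_i (signmx R B *m y) i 0 ^+ 2 = Qv B / L ^+ 2.
  rewrite /Qv mulr_suml; apply: eq_bigr => i _; rewrite mxE.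
  have -> : \sum_j signmx R B i j * y j 0 = - (\sum_j av B i j * zv B j) / L.
    rewrite mulNr mulr_suml -sumrN; apply: eq_bigr => j _; rewrite !mxE /av /sgn.
    by rewrite !mulNr mulrN mulrA.
  by field; exact: lt0r_neq0.
by rewrite ler_pdivrMr ?exprn_gt0.
Qed.

Lemma sgn_sq b : sgn b ^+ 2 = 1.
Proof. by case: b; rewrite /sgn ?expr1n ?sqrrN ?expr1n. Qed.

Lemma zv_sq B j : zv B j ^+ 2 <= 4.
Proof.
rewrite /zv /dv /av; case: ifP => _; first by rewrite expr0n /=; lra.
by rewrite /sgn; case: (B j ord0); case: (B j i1); rewrite /=; lra.
Qed.

Lemma Qv_ge0 B : 0 <= Qv B.
Proof. by rewrite /Qv sumr_ge0 // => i _; exact: sqr_ge0. Qed.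

Lemma bound_term (i j j' : 'I_n) :
  \sum_(B : 'M[bool]_n) (av B i j * zv B j) * (av B i j' * zv B j')
  <= (if j' == j then 4 * \sum_(B : 'M[bool]_n) 1 else 0).
Proof.
case: eqP => [->|/eqP hjj].
  rewrite mulr_sumr; apply: ler_sum => B _; rewrite mulr1.
  rewrite -expr2 exprMn /av sgn_sq mul1r; exact: zv_sq.
case hj: (j < 2)%N.
  by rewrite big1 // => B _; rewrite /zv hj mulr0 mul0r.
rewrite (eq_bigr (fun B : 'M[bool]_n => sgn (B i j) * (zv B j * (av B i j' * zv B j')))); last first.
  by move=> B _; rewrite /av; ring.
rewrite flip_sum //.
have n0 : ord0 != j by apply: contraFneq hj => <-.
have n1 : i1 != j by apply: contraFneq hj => <-.
move=> B; rewrite /zv /dv /av !flipmx_other //.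
Qed.

Lemma second_moment :
  \sum_(B : 'M[bool]_n) Qv B <= 4 * n%:R ^+ 2 * \sum_(B : 'M[bool]_n) 1.
Proof.
have E : forall B i, (\sum_j av B i j * zv B j) ^+ 2 =
    \sum_j \sum_j' (av B i j * zv B j) * (av B i j' * zv B j').
  by move=> B i; rewrite expr2 mulr_suml; apply: eq_bigr => j _; rewrite mulr_sumr.
rewrite /Qv.
under eq_bigr do under eq_bigr do rewrite E.
rewrite exchange_big /=.
apply: (@le_trans _ _ (\sum_(i < n) \sum_(j < n) \sum_(j' < n)
    (if j' == j then 4 * \sum_(B : 'M[bool]_n) 1 else 0))).
  apply: ler_sum => i _; rewrite exchange_big /=; apply: ler_sum => j _.
  rewrite exchange_big /=; apply: ler_sum => j' _; exact: bound_term.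
set c := 4 * \sum_(B : 'M[bool]_n) (1 : R).
have H : forall j : 'I_n, \sum_(j' < n) (if j' == j then c else 0) = c.
  by move=> j; rewrite -big_mkcond big_pred1_eq.
rewrite (eq_bigr (fun _ => \sum_(j < n) c)); last by move=> i _; apply: eq_bigr => j _; exact: H.
rewrite !sumr_const !card_ord /c -mulrnA sumr_const.
rewrite -[_ *+ (n * n)]mulr_natr natrM le_eqVlt; apply/orP; left; apply/eqP; ring.
Qed.

Lemma G0_sum : \sum_(B : 'M[bool]_n) (G0 B)%:R = 4^-1 * \sum_(B : 'M[bool]_n) (1 : R).
Proof.
rewrite (eq_bigr (fun B : 'M[bool]_n => 4^-1 * (1 + sgn (B ord0 ord0) * sgn (B ord0 i1)
   + sgn (B i1 ord0) * sgn (B i1 i1)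
   + sgn (B ord0 ord0) * (sgn (B ord0 i1) * sgn (B i1 ord0) * sgn (B i1 i1))))); last first.
  move=> B _; rewrite /G0 /sgn; case: (B ord0 ord0); case: (B ord0 i1);
    case: (B i1 ord0); case: (B i1 i1); rewrite /= ?mulr1n ?mulr0n; lra.
have d10 : (i1 : 'I_n) != ord0 by [].
have s1 : \sum_(B : 'M[bool]_n) sgn (B ord0 ord0) * sgn (B ord0 i1) = 0.
  by apply: (@flip_sum n ord0 ord0 (fun B => sgn (B ord0 i1))) => B; rewrite flipmx_other.
have s2 : \sum_(B : 'M[bool]_n) sgn (B i1 ord0) * sgn (B i1 i1) = 0.
  by apply: (@flip_sum n i1 ord0 (fun B => sgn (B i1 i1))) => B; rewrite flipmx_other.
have s3 : \sum_(B : 'M[bool]_n) sgn (B ord0 ord0) *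
     (sgn (B ord0 i1) * sgn (B i1 ord0) * sgn (B i1 i1)) = 0.
  apply: (@flip_sum n ord0 ord0 (fun B => sgn (B ord0 i1) * sgn (B i1 ord0) * sgn (B i1 i1))).
  by move=> B; rewrite [flipmx _ _ _ i1 ord0]flipmx_other' // !flipmx_other.
by rewrite -mulr_sumr !big_split /= s1 s2 s3 !addr0.
Qed.

Definition goodb (B : 'M[bool]_n) : bool := G0 B && (Qv B <= 64 * n%:R ^+ 2).

Lemma count_good : 3 / 16 * \sum_(B : 'M[bool]_n) (1 : R) <= \sum_(B : 'M[bool]_n) (goodb B)%:R.
Proof.
set N : R := n%:R ^+ 2.
have N0 : 0 < N by rewrite /N exprn_gt0 // ltr0n.
have ind : forall B, (G0 B)%:R - ((64 * N < Qv B)%R)%:R <= (goodb B)%:R :> R.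
  move=> B; rewrite /goodb; case: (G0 B); case: leP => _ /=;
  rewrite ?mulr1n ?mulr0n; lra.
have mk : forall B, (64 * N) * ((64 * N < Qv B)%R)%:R <= Qv B.
  move=> B; case: ltP => h /=; rewrite ?mulr1n ?mulr0n ?mulr1 ?mulr0 ?Qv_ge0 //.
  exact: ltW.
set S := \sum_(B : 'M[bool]_n) (1 : R).
set b := \sum_(B : 'M[bool]_n) ((64 * N < Qv B)%R)%:R :> R.
have sb : (64 * N) * b <= 4 * N * S.
  rewrite /b mulr_sumr; apply: le_trans (second_moment); apply: ler_sum => B _; exact: mk.
have hb : b <= S / 16.
  rewrite -(ler_pM2l (_ : 0 < 64 * N)); last by rewrite mulr_gt0.
  by apply: le_trans sb _; rewrite le_eqVlt; apply/orP; left; apply/eqP; field.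
apply: le_trans (ler_sum _ (fun B _ => ind B)).
rewrite sumrB G0_sum -/S -/b; lra.
Qed.

End Main.
End Aux.

Theorem theorem3p1 (R : realType) :
  exists c1 c2 : R, 0 < c1 /\ 0 < c2 /\
  forall n : nat, (0 < n)%N -> ~~ odd n ->
  forall L : R, n%:R <= L ->
  exists M : 'M[R]_n,
    opnorm M = L /\
    bern_prob (fun A : 'M[R]_n => smin (M + A) <= c1 * n%:R / L)
      >= c2 / Num.sqrt (n%:R).
Proof.
exists 8, (3 / 16); split; first lra.
split; first lra.
move=> n n0 nodd L hL.
case: n n0 nodd hL => [|[|k]] // _ _ hL.
have L0 : 0 < L by apply: lt_le_trans hL; rewrite ltr0n.
exists (Mdef L); split; first exact: opnormM.
rewrite /bern_prob.
set S : R := #|{: 'M[bool]_k.+2}|%:R.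
have S_eq : \sum_(B : 'M[bool]_k.+2) (1 : R) = S by rewrite sumr_const.
have S0 : 0 < S.
  rewrite /S ltr0n; apply/card_gt0P; by exists (const_mx false).
have cnt : \sum_(B : 'M[bool]_k.+2) (goodb R B)%:R <= (
   #|[set B : 'M[bool]_k.+2 | smin (Mdef L + signmx R B) <= 8 * (k.+2)%:R / L]|%:R : R).
  rewrite -sum1_card natr_sum [X in _ <= X]big_mkcond /=; apply: ler_sum => B _.
  case hg: (goodb R B); last by case: (_ \in _).
  move: hg => /andP[hG hQ].
  rewrite mem_set ?lexx //=; apply: (key L0 hG).
    by apply: divr_ge0; [rewrite mulr_ge0 // ler0n | exact: ltW].
  apply: le_trans hQ _; rewrite le_eqVlt; apply/orP; left; apply/eqP.
  by field; exact: lt0r_neq0.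
have := count_good R k; rewrite S_eq => hc.
have sq1 : 1 <= Num.sqrt ((k.+2)%:R : R).
  by rewrite -[X in X <= _]sqrtr1 ler_sqrt ?ler0n // ler1n.
have sq0 : 0 < Num.sqrt ((k.+2)%:R : R) by apply: lt_le_trans sq1.
rewrite ler_pdivlMr //; apply: le_trans (le_trans hc cnt).
rewrite ler_pM2r // ler_pdivrMr //; apply: ler_peMr => //; lra.
Qed.
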